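(* Let $i\geq 1$. For $n\geq 0$, let $M(i,n)$ be the set of pairs $(L_1,L_2)$ of walks of length $n$ with steps $(1,1)$ and $(1,-1)$, where $L_1$ starts at $(0,0)$ and $L_2$ starts at $(0,2i)$, such that $L_1$ and $L_2$ intersect (share a common lattice point). Let $M_i(t)=\sum_{n\geq0}|M(i,n)|t^n$. Let $C(t)=\sum_{n\geq0}\frac{1}{n+1}\binom{2n}{n}t^n$ and $D(t)=tC^2(t)$. Then $$M_i(t)=\frac{D^i(t)}{1-4t}.$$ *)

(* Defs.v *)
From mathcomp Require Import all_boot all_order all_algebra.
Set Implicit Arguments. Unset Strict Implicit. Unset Printing Implicit Defensive.
Import Order.TTheory GRing.Theory Num.Theory.
Local Open Scope ring_scope.

(* A walk of length n with steps (1,1) (true) and (1,-1) (false). *)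
Definition walk (n : nat) := {ffun 'I_n -> bool}.

Definition walk_point (n : nat) (y0 : int) (s : walk n) (k : nat) : int * int :=
  (k%:Z, y0 + \sum_(j < n | (j < k)%N) (if s j then 1 else -1)).

Definition walks_intersect (n : nat) (y1 y2 : int) (L1 L2 : walk n) : bool :=
  [exists k1 : 'I_n.+1, exists k2 : 'I_n.+1,
     walk_point y1 L1 k1 == walk_point y2 L2 k2].

Definition Mset (i n : nat) : {set walk n * walk n} :=
  [set p | walks_intersect 0 (2 * i)%:Z p.1 p.2].

Definition fps := nat -> rat.
Definition fps_mul (f g : fps) : fps :=
  fun n => \sum_(k < n.+1) f k * g (n - k)%N.
Definition fps_one : fps := fun n => if n is 0 then 1 else 0.
Definition fps_pow (f : fps) (i : nat) : fps := iter i (fps_mul f) fps_one.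
Definition fps_shift (f : fps) : fps := fun n => if n is m.+1 then f m else 0.
Definition inv_1m4t : fps := fun n => 4 ^+ n.

Definition Mgf (i : nat) : fps := fun n => (#|Mset i n|)%:R.
Definition Cgf : fps := fun n => ('C(2 * n, n))%:R / (n.+1)%:R.
Definition Dgf : fps := fps_shift (fps_mul Cgf Cgf).

(* Main.v *)
Require Import Defs.
From mathcomp Require Import all_boot all_order all_algebra.
From Stdlib Require Import FunctionalExtensionality.
From mathcomp Require Import zify ring lra.
Set Implicit Arguments. Unset Strict Implicit. Unset Printing Implicit Defensive.
Import Order.TTheory GRing.Theory Num.Theory.
Local Open Scope ring_scope.

Definition T (n : nat) (f : fps) : {poly rat} := \poly_(k < n.+1) f k.

Lemma coefT n f m : (m <= n)%N -> (T n f)`_m = f m.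
Proof. by move=> h; rewrite coef_poly ltnS h. Qed.

Lemma fps_mul_poly f g n m : (m <= n)%N -> fps_mul f g m = (T n f * T n g)`_m.
Proof.
move=> hm; rewrite coefM /fps_mul; apply: eq_bigr => k _.
have hk : (k <= n)%N by apply: leq_trans hm; rewrite -ltnS.
have hk2 : (m - k <= n)%N by apply: leq_trans (leq_subr _ _) hm.
by rewrite !coefT.
Qed.

Lemma fps_mulA f g h : fps_mul (fps_mul f g) h = fps_mul f (fps_mul g h).
Proof.
apply: functional_extensionality => n.
transitivity ((T n f * T n g * T n h)`_n).
  rewrite coefM /fps_mul; apply: eq_bigr => k _.
  have hk : (k <= n)%N by rewrite -ltnS.
  by rewrite coefT ?leq_subr // -(fps_mul_poly f g hk).
rewrite -mulrA coefM /fps_mul; apply: eq_bigr => k _.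
have hk : (k <= n)%N by rewrite -ltnS.
by rewrite coefT // -(fps_mul_poly g h (leq_subr k n)).
Qed.

Lemma fps_mulC f g : fps_mul f g = fps_mul g f.
Proof.
apply: functional_extensionality => n.
by rewrite !(fps_mul_poly _ _ (leqnn n)) mulrC.
Qed.

Definition fps_add (f g : fps) : fps := fun n => f n + g n.
Definition fps_scal (a : rat) (f : fps) : fps := fun n => a * f n.

Lemma fps_mulDl f g h : fps_mul (fps_add f g) h = fps_add (fps_mul f h) (fps_mul g h).
Proof.
apply: functional_extensionality => n.
by rewrite /fps_add /fps_mul -big_split; apply: eq_bigr => k _; rewrite mulrDl.
Qed.

Lemma fps_mulZl a f h : fps_mul (fps_scal a f) h = fps_scal a (fps_mul f h).
Proof.
apply: functional_extensionality => n.
by rewrite /fps_scal /fps_mul mulr_sumr; apply: eq_bigr => k _; rewrite mulrA.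
Qed.

Lemma fps_mul1l f : fps_mul fps_one f = f.
Proof.
apply: functional_extensionality => n.
rewrite /fps_mul big_ord_recl /= mul1r subn0 big1 ?addr0 // => k _.
by rewrite mul0r.
Qed.

Lemma fps_mul_shiftl f g : fps_mul (fps_shift f) g = fps_shift (fps_mul f g).
Proof.
apply: functional_extensionality => n.
case: n => [|n]; first by rewrite /fps_mul big_ord_recl big_ord0 /= mul0r addr0.
rewrite /fps_mul big_ord_recl /= mul0r add0r; apply: eq_bigr => k _.
by rewrite /bump /= add1n subSS.
Qed.
Lemma Cgf_rec n : (n.+2)%:R * Cgf n.+1 = (4 * n + 2)%:R * Cgf n.
Proof.
have h1 : (2 * n.+1 * 'C((2*n).+1, n) = n.+1 * 'C(2 * n.+1, n.+1))%N.
  by rewrite -mul_bin_diag mulnS.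
have h2 : ((2*n).+1 * 'C(2*n, n) = n.+1 * 'C((2*n).+1, n))%N.
  have := mul_bin_down (2*n).+1 n; rewrite /=.
  have -> : ((2*n).+1 - n = n.+1)%N by lia.
  by [].
Abort.

Lemma Cgf_rec n : (n.+2)%:R * Cgf n.+1 = (4 * n + 2)%:R * Cgf n.
Proof.
have h1 : (2 * n.+1 * 'C((2*n).+1, n) = n.+1 * 'C(2 * n.+1, n.+1))%N.
  by rewrite -mul_bin_diag mulnS.
have h2 : ((2*n).+1 * 'C(2*n, n) = n.+1 * 'C((2*n).+1, n))%N.
  have := mul_bin_down (2*n).+1 n; rewrite /=.
  have -> : ((2*n).+1 - n = n.+1)%N by lia.
  by [].
have hE : 'C(2*n.+1, n.+1) = (2 * 'C((2*n).+1,n))%N by nia.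
have hB : ('C((2*n).+1,n))%:R = ((2*n).+1)%:R * ('C(2*n,n))%:R / (n.+1)%:R :> rat.
  rewrite -natrM h2 natrM mulrC mulrA mulVf ?mul1r //.
  by rewrite pnatr_eq0.
rewrite /Cgf hE natrM hB.
have h3 : (n.+1)%:R != 0 :> rat by rewrite pnatr_eq0.
have h4 : (n.+2)%:R != 0 :> rat by rewrite pnatr_eq0.
rewrite -[n.+2]addn2 -[n.+1]addn1 in h4 *.
rewrite -[n.+1]addn1 in h3 *.
have e : ((2 * n).+1)%:R = 2 * n%:R + 1 :> rat by rewrite -[_.+1]addn1 natrD natrM.
rewrite e !natrD /=.
rewrite natrD in h3; rewrite natrD in h4.
field; by rewrite h3 h4.
Qed.

Definition vv : fps := fun k => if k is m.+1 then -2 * Cgf m else 1.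

Lemma vv_rec k : (k.+1)%:R * vv k.+1 = (4 * k%:R - 2) * vv k.
Proof.
case: k => [|m].
  by rewrite /vv /Cgf /= bin0; field.
rewrite /vv mulrCA Cgf_rec -[m.+1]addn1 !natrD.
ring.
Qed.

Lemma sym_sum (a : fps) n :
  2 * \sum_(k < n.+1) k%:R * a k * a (n - k)%N = n%:R * fps_mul a a n.
Proof.
have eq : \sum_(k < n.+1) k%:R * a k * a (n - k)%N =
          \sum_(k < n.+1) (n - k)%N%:R * a k * a (n - k)%N.
  rewrite (reindex_inj rev_ord_inj) /=; apply: eq_bigr => k _.
  have hk : (k <= n)%N by rewrite -ltnS.
  by rewrite subSS subKn // mulrAC.
transitivity (\sum_(k < n.+1) k%:R * a k * a (n - k)%N +
              \sum_(k < n.+1) (n - k)%N%:R * a k * a (n - k)%N).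
  by rewrite -eq; ring.
rewrite -big_split /fps_mul mulr_sumr; apply: eq_bigr => k _.
have hk : (k <= n)%N by rewrite -ltnS.
by rewrite -!mulrA /= -mulrDl -natrD subnKC.
Qed.

Lemma ww_rec m : (m.+1)%:R * fps_mul vv vv m.+1 = (4 * m%:R - 4) * fps_mul vv vv m.
Proof.
rewrite -(sym_sum vv m.+1) big_ord_recl.
rewrite [X in 2 * (X + _)](_ : _ = 0); last by rewrite /= mulr0n !mul0r.
rewrite add0r.
rewrite (eq_bigr (fun i : 'I_m.+1 => (4 * i%:R - 2) * vv i * vv (m - i)%N)); last first.
  by move=> i _; rewrite /= /bump /= add1n subSS vv_rec.
have -> : \sum_(i < m.+1) (4 * i%:R - 2) * vv i * vv (m - i)%N
   = 4 * \sum_(k < m.+1) k%:R * vv k * vv (m - k)%N - 2 * fps_mul vv vv m.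
  rewrite /fps_mul !mulr_sumr -sumrB; apply: eq_bigr => j _; by rewrite -!mulrA mulrBl !mulrA.
have hS := sym_sum vv m.
transitivity (4 * (2 * \sum_(k < m.+1) k%:R * vv k * vv (m - k)%N) - 4 * fps_mul vv vv m).
  ring.
rewrite hS; ring.
Qed.


Lemma ww_vanish m : fps_mul vv vv m.+2 = 0.
Proof.
elim: m => [|m IH].
  have h := ww_rec 1.
  rewrite (_ : 4 * 1%:R - 4 = 0 :> rat) ?mul0r in h; last by rewrite mulr1 subrr.
  by move/eqP: h; rewrite mulf_eq0 pnatr_eq0 /= => /eqP.
have h := ww_rec m.+2.
rewrite IH mulr0 in h.
by move/eqP: h; rewrite mulf_eq0 pnatr_eq0 /= => /eqP.
Qed.

Lemma Cgf_cat n : Cgf n.+1 = fps_mul Cgf Cgf n.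
Proof.
have := ww_vanish n.
rewrite /fps_mul big_ord_recl big_ord_recr /=.
rewrite (eq_bigr (fun i : 'I_n.+1 => 4 * (Cgf i * Cgf (n - i)%N))); last first.
  move=> i _; have hi : (i <= n)%N by rewrite -ltnS.
  rewrite /bump add0n add1n subSS subSn //=; ring.
rewrite /bump /= add1n subnn add0n /= -mulr_sumr => h.
lra.
Qed.

Lemma CeqD : Cgf = fps_add fps_one Dgf.
Proof.
apply: functional_extensionality => n; rewrite /fps_add.
case: n => [|n]; first by rewrite /Cgf /Dgf /fps_one /fps_shift /= bin0 addr0 divr1.
by rewrite /Dgf /fps_shift /fps_one add0r Cgf_cat.
Qed.

Lemma fps_mulDr f g h : fps_mul h (fps_add f g) = fps_add (fps_mul h f) (fps_mul h g).
Proof. by rewrite fps_mulC fps_mulDl !(fps_mulC h). Qed.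

Lemma Dmul P : fps_mul Dgf P =
  fps_shift (fps_add (fps_add P (fps_mul Dgf P)) (fps_add (fps_mul Dgf P) (fps_mul Dgf (fps_mul Dgf P)))).
Proof.
have hD : Dgf = fps_shift (fps_mul (fps_add fps_one Dgf) (fps_add fps_one Dgf)).
  by rewrite {1}/Dgf CeqD.
transitivity (fps_mul (fps_shift (fps_mul (fps_add fps_one Dgf) (fps_add fps_one Dgf))) P).
  by rewrite -hD.
by rewrite fps_mul_shiftl fps_mulA !fps_mulDl !fps_mul1l fps_mulDr.
Qed.

Definition G (d n : nat) : rat := fps_mul (fps_pow Dgf d) inv_1m4t n.

Lemma G0 n : G 0 n = 4 ^+ n.
Proof. by rewrite /G /fps_pow /= fps_mul1l. Qed.

Lemma GS d n : G d.+1 n = fps_mul Dgf (G d) n.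
Proof. by rewrite /G /fps_pow iterS fps_mulA. Qed.

Lemma GS0 d : G d.+1 0 = 0.
Proof. by rewrite GS Dmul. Qed.

Lemma GSS d n : G d.+1 n.+1 = G d n + 2 * G d.+1 n + G d.+2 n.
Proof.
rewrite GS Dmul /fps_shift /fps_add.
have e : G d.+2 n = fps_mul Dgf (fps_mul Dgf (G d)) n.
  rewrite GS; congr fps_mul; apply: functional_extensionality => m; exact: GS.
rewrite e -GS; ring.
Qed.

Definition st (b : bool) : int := if b then 1 else -1.
Definition ht n (y0 : int) (s : walk n) (k : nat) : int :=
  y0 + \sum_(j < n | (j < k)%N) st (s j).
Definition isect n (y1 y2 : int) (L1 L2 : walk n) : bool :=
  [exists k : 'I_n.+1, ht y1 L1 k == ht y2 L2 k].

Lemma walks_intersectE n y1 y2 (L1 L2 : walk n) :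
  walks_intersect y1 y2 L1 L2 = isect y1 y2 L1 L2.
Proof.
rewrite /walks_intersect /isect /walk_point.
apply/existsP/existsP.
  move=> [k1 /existsP [k2 /eqP [hk hy]]].
  have e : (k1 : nat) = k2 by case: hk.
  by exists k1; rewrite /ht hy e.
move=> [k /eqP h]; exists k; apply/existsP; exists k.
by apply/eqP; congr pair; exact: h.
Qed.

Definition wcons n (b : bool) (s : walk n) : walk n.+1 :=
  [ffun j : 'I_n.+1 => if unlift ord0 j is Some j' then s j' else b].
Definition wtl n (s : walk n.+1) : walk n := [ffun j => s (lift ord0 j)].

Lemma wcons0 n b (s : walk n) : wcons b s ord0 = b.
Proof. by rewrite /wcons ffunE unlift_none. Qed.

Lemma wconsS n b (s : walk n) j : wcons b s (lift ord0 j) = s j.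
Proof. by rewrite /wcons ffunE liftK. Qed.

Lemma ht0 n y0 (s : walk n) : ht y0 s 0 = y0.
Proof. by rewrite /ht big1 ?addr0 // => j; rewrite ltn0. Qed.

Lemma ht_cons n y0 b (s : walk n) k : ht y0 (wcons b s) k.+1 = ht (y0 + st b) s k.
Proof.
rewrite /ht !(big_mkcond (fun j : 'I__ => (j < _)%N)) big_ord_recl /= wcons0 addrA.
congr (_ + _); apply: eq_bigr => j _.
by rewrite /bump /= add1n ltnS wconsS.
Qed.

Lemma isect_cons n y1 y2 b1 b2 (s1 s2 : walk n) :
  isect y1 y2 (wcons b1 s1) (wcons b2 s2) = (y1 == y2) || isect (y1 + st b1) (y2 + st b2) s1 s2.
Proof.
rewrite /isect; apply/existsP/orP.
  move=> [k h]; case: (unliftP ord0 k) h => [k'|] -> h.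
    by right; apply/existsP; exists k'; rewrite lift0 !ht_cons in h.
  by left; rewrite !ht0 in h.
move=> [h | /existsP [k h]].
  by exists ord0; rewrite !ht0.
by exists (lift ord0 k); rewrite lift0 !ht_cons.
Qed.

Lemma isect0 y1 y2 (L1 L2 : walk 0) : isect y1 y2 L1 L2 = (y1 == y2).
Proof.
rewrite /isect; apply/existsP/idP.
  by move=> [k]; rewrite (ord1 k) !ht0.
by move=> h; exists ord0; rewrite !ht0.
Qed.

Lemma isect_eq n y (L1 L2 : walk n) : isect y y L1 L2.
Proof. by apply/existsP; exists ord0; rewrite !ht0. Qed.

Definition N n (y1 y2 : int) : rat :=
  \sum_(L1 : walk n) \sum_(L2 : walk n) ((isect y1 y2 L1 L2 : nat)%:R).

Lemma sum_cons n (F : walk n.+1 -> rat) :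
  \sum_(s : walk n.+1) F s = \sum_(b : bool) \sum_(s : walk n) F (wcons b s).
Proof.
rewrite (pair_bigA _ (fun b s => F (wcons b s))).
rewrite (reindex (fun p : bool * walk n => wcons p.1 p.2)) //.
exists (fun s : walk n.+1 => (s ord0, wtl s)).
  move=> [b s] _ /=; rewrite wcons0; congr pair.
  by apply/ffunP => j; rewrite ffunE wconsS.
move=> s _ /=; apply/ffunP => j; rewrite /wcons ffunE.
by case: (unliftP ord0 j) => [j'|] -> ; rewrite ?ffunE.
Qed.

Lemma card_walk n : #|walk n| = (2 ^ n)%N.
Proof. by rewrite card_ffun card_bool card_ord. Qed.

Lemma N_eq n y : N n y y = 4 ^+ n.
Proof.
rewrite /N (eq_bigr (fun _ => (2 ^ n)%N%:R)); last first.
  move=> L1 _; rewrite (eq_bigr (fun _ => 1)); last by move=> L2 _; rewrite isect_eq.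
  by rewrite sumr_const card_walk.
rewrite sumr_const card_walk.
have -> : ((2^n)%N%:R *+ (2^n)%N : rat) = ((2^n * 2^n)%N)%:R by rewrite natrM mulr_natr.
rewrite -expnMn natrX.
by [].
Qed.

Lemma N_rec n y1 y2 : y1 != y2 ->
  N n.+1 y1 y2 = \sum_(b1 : bool) \sum_(b2 : bool) N n (y1 + st b1) (y2 + st b2).
Proof.
move=> hne; rewrite /N sum_cons; apply: eq_bigr => b1 _.
rewrite (eq_bigr (fun s1 => \sum_(b2 : bool) \sum_(s2 : walk n)
   ((isect (y1 + st b1) (y2 + st b2) s1 s2 : nat)%:R))); last first.
  move=> s1 _; rewrite sum_cons; apply: eq_bigr => b2 _; apply: eq_bigr => s2 _.
  by rewrite isect_cons (negbTE hne).
by rewrite exchange_big.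
Qed.

Lemma N_G n : forall (y1 y2 : int) (d : nat), y2 = y1 + (2 * d)%N%:Z -> N n y1 y2 = G d n.
Proof.
elim: n => [|n IH] y1 y2 d e.
  case: d e => [|d] e.
    have -> : y2 = y1 by rewrite e muln0 addr0.
    by rewrite N_eq G0.
  have hne : (y1 == y2) = false by apply/eqP; lia.
  rewrite GS0 /N big1 // => L1 _; rewrite big1 // => L2 _.
  by rewrite isect0 hne.
case: d e => [|d] e.
  have -> : y2 = y1 by rewrite e muln0 addr0.
  by rewrite N_eq G0.
have hne : y1 != y2 by apply/eqP; lia.
rewrite N_rec // !big_bool.
rewrite (IH (y1 + st true) (y2 + st true) d.+1); last by rewrite /st; lia.
rewrite (IH (y1 + st true) (y2 + st false) d); last by rewrite /st; lia.
rewrite (IH (y1 + st false) (y2 + st true) d.+2); last by rewrite /st; lia.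
rewrite (IH (y1 + st false) (y2 + st false) d.+1); last by rewrite /st; lia.
rewrite GSS /=; ring.
Qed.

Theorem corollary3p4 (i : nat) (hi : (1 <= i)%N) :
  Mgf i = fps_mul (fps_pow Dgf i) inv_1m4t.
Proof.
apply: functional_extensionality => n.
transitivity (N n 0 (2 * i)%:Z); last first.
  rewrite (@N_G n 0 (2 * i)%:Z i) //; lia.
rewrite /Mgf /Mset -sum1_card natr_sum big_mkcond /= /N pair_bigA /=.
apply: eq_bigr => [[L1 L2]] _; rewrite inE /= walks_intersectE.
by case: isect.
Qed.
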